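(* The class of induced subgraphs of the square grid is $(6,1)$-disjointness-expressing.
   Context: The square grid is the infinite graph with vertex set $\mathbb{Z}^2$ in which two points are adjacent iff their Euclidean distance is 1; an induced subgraph of the square grid means a finite graph isomorphic to an induced subgraph of it. A class $\mathcal{C}$ of graphs is $(s,\kappa)$-disjointness-expressing if for some constant $\alpha>0$, for every positive integer $N$ and every $X\subseteq\{1,\dots,N\}$ one can define graphs $L(X)$ and $R(X)$, each containing a labelled set $S$ of special vertices, such that for all $A,B\subseteq\{1,\dots,N\}$: (i) the graph $g(L(A),R(B))$ obtained by identifying each vertex of $S$ in $L(A)$ with the corresponding vertex of $S$ in $R(B)$ is connected and has at most $\alpha N^{1/\kappa}$ vertices; (ii) the subgraph of $g(L(A),R(B))$ induced by the closed neighborhood $N[S]$ is independent of $A,B$ (for all $A,A',B,B'$ there is an isomorphism between these induced subgraphs that is the identity on $S$) and has at most $s$ vertices; (iii) $g(L(A),R(B))\in\mathcal{C}$ if and only if $A\cap B=\emptyset$. *)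

(* Defs.v *)
From Stdlib Require Import Reals.
From mathcomp Require Import all_boot all_order all_algebra.
Set Implicit Arguments. Unset Strict Implicit. Unset Printing Implicit Defensive.
Import GRing.Theory Num.Theory.

Record fgraph := FGraph { vert : finType; adj : rel vert }.
Arguments adj {f}.

Definition simple_graph (G : fgraph) : Prop :=
  (forall x y : vert G, adj x y = adj y x) /\ (forall x : vert G, ~~ adj x x).

Definition connected_graph (G : fgraph) : Prop :=
  forall x y : vert G, connect (@adj G) x y.

Definition iso_graph (G H : fgraph) (phi : vert G -> vert H) : Prop :=
  bijective phi /\ forall x y, adj (phi x) (phi y) = adj x y.

(* Square grid on Z^2: adjacent iff Euclidean distance is 1,
   i.e. squared Euclidean distance equals 1. *)
Definition grid_adj (p q : int * int) : bool :=
  ((p.1 - q.1) ^+ 2 + (p.2 - q.2) ^+ 2 == 1)%R.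

Definition grid_induced (G : fgraph) : Prop :=
  exists f : vert G -> int * int,
    injective f /\ forall x y, adj x y = grid_adj (f x) (f y).

Definition induced (G : fgraph) (A : {set vert G}) : fgraph :=
  @FGraph {x : vert G | x \in A} (fun x y => adj (val x) (val y)).

Record lgraph (k : nat) := LGraph { lg : fgraph; lab : 'I_k -> vert lg }.

Definition good_lgraph k (L : lgraph k) : Prop :=
  simple_graph (lg L) /\ injective (lab L).

Section Glue.
Variables (k : nat) (L R : lgraph k).

Definition glue_keep (x : vert (lg L) + vert (lg R)) : bool :=
  match x with inl _ => true | inr v => v \notin codom (lab R) end.

Definition glue_rmap (v : vert (lg R)) : vert (lg L) + vert (lg R) :=
  match [pick i | lab R i == v] with Some i => inl (lab L i) | None => inr v end.

Definition glue_adj (x y : {x | glue_keep x}) : bool :=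
  [exists a, exists b, adj a b && (inl a == val x) && (inl b == val y)] ||
  [exists a, exists b, adj a b && (glue_rmap a == val x) && (glue_rmap b == val y)].

(* g(L,R): identify each special vertex of L with the same-labelled one of R *)
Definition glue : fgraph := @FGraph {x | glue_keep x} glue_adj.

Definition glue_sp (i : 'I_k) : vert glue :=
  exist (fun x => is_true (glue_keep x)) (inl (lab L i)) isT.
End Glue.

Definition closed_nbhd (G : fgraph) k (sp : 'I_k -> vert G) : {set vert G} :=
  [set x | [exists i, x == sp i] || [exists i, adj x (sp i)]].

Definition glue_NS k (L R : lgraph k) : {set vert (glue L R)} :=
  closed_nbhd (@glue_sp k L R).

(* (s, kappa)-disjointness-expressing; subsets of {1..N} are represented as
   subsets of 'I_N = {0..N-1}. *)
Definition disjointness_expressing (C : fgraph -> Prop) (s kappa : nat) : Prop :=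
  exists alpha : R, Rlt 0 alpha /\
  forall N : nat, (0 < N)%N ->
  exists k : nat, exists Lf Rf : {set 'I_N} -> lgraph k,
    (forall X, good_lgraph (Lf X) /\ good_lgraph (Rf X)) /\
    (forall A B : {set 'I_N},
       connected_graph (glue (Lf A) (Rf B)) /\
       Rle (INR #|vert (glue (Lf A) (Rf B))|) (Rmult alpha (Rpower (INR N) (Rinv (INR kappa))))) /\
    (forall A A' B B' : {set 'I_N},
       exists phi : vert (induced (glue_NS (Lf A) (Rf B))) ->
                    vert (induced (glue_NS (Lf A') (Rf B'))),
         iso_graph phi /\
         forall x i, val x = glue_sp (Lf A) (Rf B) i ->
                     val (phi x) = glue_sp (Lf A') (Rf B') i) /\
    (forall A B : {set 'I_N}, (#|glue_NS (Lf A) (Rf B)| <= s)%N) /\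
    (forall A B : {set 'I_N},
       C (glue (Lf A) (Rf B)) <-> A :&: B = set0).

(* Main.v *)
Require Import Defs.
From Stdlib Require Import Reals ZArith Lia Lra.
From mathcomp Require Import all_boot all_order all_algebra zify.
Set Implicit Arguments. Unset Strict Implicit. Unset Printing Implicit Defensive.

Definition gridn (p q : nat * nat) : bool :=
  ((p.1 == q.1) && ((p.2 == q.2.+1) || (q.2 == p.2.+1))) ||
  ((p.2 == q.2) && ((p.1 == q.1.+1) || (q.1 == p.1.+1))).
Definition teethcross (p q : nat * nat) : bool :=
  (2 <= p.1) && ((p.2 == 3) && (q.2 == 2) || (p.2 == 2) && (q.2 == 3)).

Local Open Scope Z_scope.
Definition unitv (t1 t2 : Z) : Prop :=
  (t1 = 1 \/ t1 = -1) /\ t2 = 0 \/ t1 = 0 /\ (t2 = 1 \/ t2 = -1).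

Lemma ext_raw (p1 p2 t1 t2 n1 n2 c1 c2 d1 d2 : Z) :
 unitv t1 t2 -> unitv n1 n2 -> t1*n1 + t2*n2 = 0 ->
 unitv (c1-p1) (c2-p2) -> ~ (c1 = p1+t1 /\ c2 = p2+t2) -> ~ (c1 = p1-n1 /\ c2 = p2-n2) ->
 unitv (d1-c1) (d2-c2) -> unitv (d1-(p1+t1)) (d2-(p2+t2)) -> ~ (d1 = p1 /\ d2 = p2) ->
 c1 = p1+n1 /\ c2 = p2+n2.
Proof.
unfold unitv; intros Ht Hn Hp Hc N1 N2 Hd1 Hd2 N3.
destruct Ht as [[[]?]|[?[]]]; destruct Hn as [[[]?]|[?[]]]; subst; try lia;
destruct Hc as [[[]?]|[?[]]]; try lia;
destruct Hd1 as [[[]?]|[?[]]]; try lia;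
destruct Hd2 as [[[]?]|[?[]]]; lia.
Qed.

Lemma base_raw (p1 p2 u1 u2 v1 v2 d1 d2 : Z) :
 unitv u1 u2 -> unitv v1 v2 -> ~ (u1 = v1 /\ u2 = v2) ->
 unitv (d1-(p1+u1)) (d2-(p2+u2)) -> unitv (d1-(p1+v1)) (d2-(p2+v2)) -> ~ (d1 = p1 /\ d2 = p2) ->
 u1*v1 + u2*v2 = 0.
Proof.
unfold unitv; intros Hu Hv N1 H1 H2 N2.
destruct Hu as [[[]?]|[?[]]]; destruct Hv as [[[]?]|[?[]]]; subst; try lia;
destruct H1 as [[[]?]|[?[]]]; try lia;
destruct H2 as [[[]?]|[?[]]]; lia.
Qed.

Lemma tooth_raw (q1 q2 u1 u2 v1 v2 t1 t2 : Z) :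
 unitv u1 u2 -> unitv v1 v2 -> u1*v1 + u2*v2 = 0 ->
 unitv (t1-q1) (t2-q2) -> ~ (t1 = q1+u1 /\ t2 = q2+u2) -> ~ (t1 = q1-u1 /\ t2 = q2-u2) ->
 ~ (t1 = q1+v1 /\ t2 = q2+v2) -> t1 = q1 - v1 /\ t2 = q2 - v2.
Proof.
unfold unitv; intros Hu Hv Hp H1 N1 N2 N3.
destruct Hu as [[[]?]|[?[]]]; destruct Hv as [[[]?]|[?[]]]; subst; try lia;
destruct H1 as [[[]?]|[?[]]]; lia.
Qed.

Lemma base_raw2 (p1 p2 u1 u2 v1 v2 d1 d2 : Z) :
 unitv u1 u2 -> unitv v1 v2 -> ~ (u1 = v1 /\ u2 = v2) ->
 unitv (d1-(p1+u1)) (d2-(p2+u2)) -> unitv (d1-(p1+v1)) (d2-(p2+v2)) -> ~ (d1 = p1 /\ d2 = p2) ->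
 d1 = p1 + u1 + v1 /\ d2 = p2 + u2 + v2.
Proof.
unfold unitv; intros Hu Hv N1 H1 H2 N2.
destruct Hu as [[[]?]|[?[]]]; destruct Hv as [[[]?]|[?[]]]; subst; try lia;
destruct H1 as [[[]?]|[?[]]]; try lia;
destruct H2 as [[[]?]|[?[]]]; lia.
Qed.

Section Rigid.
Variables (W : nat) (F : nat * nat -> Z * Z) (reg : nat * nat -> bool).
Definition adjF p q := unitv ((F p).1 - (F q).1) ((F p).2 - (F q).2).
Hypothesis Finj : forall p q, reg p -> reg q -> F p = F q -> p = q.
Hypothesis Fadj : forall p q, reg p -> reg q -> adjF p q <-> (gridn p q && ~~ teethcross p q).
Hypothesis Freg : forall x y, (x < W)%N -> (y < 6)%N -> (y <= 1 \/ 4 <= y \/ x <= 1)%N -> reg (x,y).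

Lemma neqF p q : reg p -> reg q -> p <> q -> ~ ((F p).1 = (F q).1 /\ (F p).2 = (F q).2).
Proof.
move=> rp rq npq [e1 e2]; apply: npq; apply: Finj => //.
by move: e1 e2; case: (F p) => ??; case: (F q) => ?? /= -> ->.
Qed.

Lemma neqF' p q : reg p -> reg q -> p <> q -> (F p).1 = (F q).1 -> (F p).2 = (F q).2 -> False.
Proof. by move=> rp rq n e1 e2; apply: (neqF rp rq n). Qed.

Lemma extF a b a' c d t1 t2 n1 n2 :
  reg a -> reg b -> reg a' -> reg c -> reg d ->
  (F b).1 = (F a).1 + t1 -> (F b).2 = (F a).2 + t2 ->
  (F a').1 = (F a).1 - n1 -> (F a').2 = (F a).2 - n2 ->
  unitv t1 t2 -> unitv n1 n2 -> t1*n1 + t2*n2 = 0 ->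
  adjF c a -> adjF d c -> adjF d b -> c <> b -> c <> a' -> d <> a ->
  (F c).1 = (F a).1 + n1 /\ (F c).2 = (F a).2 + n2.
Proof.
move=> ra rb ra' rc rd eb1 eb2 ea1 ea2 ut un p Hca Hdc Hdb ncb nca nda.
have N1 := neqF rc rb ncb. have N2 := neqF rc ra' nca. have N3 := neqF rd ra nda.
rewrite eb1 eb2 ea1 ea2 in N1 N2. rewrite /adjF eb1 eb2 in Hdb.
exact: (ext_raw ut un p Hca N1 N2 Hdc Hdb N3).
Qed.

Section Frame.
Variables (O1 O2 U1 U2 V1 V2 : Z).
Hypothesis HU : unitv U1 U2.
Hypothesis HV : unitv V1 V2.
Hypothesis HUV : U1 * V1 + U2 * V2 = 0.

Definition inv (x y : nat) :=
  (F (x, y)).1 = O1 + Z.of_nat x * U1 + Z.of_nat y * V1 /\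
  (F (x, y)).2 = O2 + Z.of_nat x * U2 + Z.of_nat y * V2.

Lemma adjF_of p q : reg p -> reg q -> gridn p q && ~~ teethcross p q -> adjF p q.
Proof. by move=> rp rq h; apply/Fadj. Qed.

Lemma unitvN a b : unitv a b -> unitv (- a) (- b).
Proof. unfold unitv; lia. Qed.

Ltac solve_ext R A :=
  try (apply: R; lia); try lia; try (apply: A; rewrite /gridn /=; lia);
  try (case=> ?; lia); try lia; try exact: HU; try exact: HV; try (apply: unitvN; exact: HV); try (apply: unitvN; exact: HU).

Lemma arm_right x y : (x.+2 < W)%N -> (y == 0)%N || (y == 4)%N ->
  inv x y -> inv x.+1 y -> inv x y.+1 -> inv x.+1 y.+1 -> inv x.+2 y /\ inv x.+2 y.+1.
Proof.
move=> hx hy [i1 j1] [i2 j2] [i3 j3] [i4 j4].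
have ry : (y.+1 < 6)%N by lia.
have R : forall a b, (a < W)%N -> (b == y) || (b == y.+1) -> reg (a,b).
  by move=> a b ha hb; apply: Freg; lia.
have A : forall a b a' b', (a < W)%N -> (a' < W)%N -> (b == y) || (b == y.+1) -> (b' == y) || (b' == y.+1) ->
   gridn (a,b) (a',b') -> adjF (a,b) (a',b').
  move=> a b a' b' ha ha' hb hb' g; apply: adjF_of; try exact: R.
  by rewrite g /=; rewrite /teethcross /=; lia.
have [c1 c2] : (F (x.+2, y)).1 = (F (x.+1, y)).1 + U1 /\ (F (x.+2, y)).2 = (F (x.+1, y)).2 + U2.
  apply: (@extF (x.+1,y) (x.+1,y.+1) (x,y) (x.+2,y) (x.+2,y.+1) V1 V2 U1 U2);
    rewrite ?i1 ?i2 ?i3 ?i4 ?j1 ?j2 ?j3 ?j4; solve_ext R A.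
have [d1 d2] : (F (x.+2, y.+1)).1 = (F (x.+1, y.+1)).1 + U1 /\ (F (x.+2, y.+1)).2 = (F (x.+1, y.+1)).2 + U2.
  apply: (@extF (x.+1,y.+1) (x.+1,y) (x,y.+1) (x.+2,y.+1) (x.+2,y) (-V1) (-V2) U1 U2);
    rewrite ?i1 ?i2 ?i3 ?i4 ?j1 ?j2 ?j3 ?j4; solve_ext R A.
rewrite /inv c1 c2 d1 d2 i2 j2 i4 j4; lia.
Qed.

Hypothesis W2 : (1 < W)%N.

Lemma col_down y : (y.+2 < 6)%N ->
  inv 0 y.+1 -> inv 1 y.+1 -> inv 0 y.+2 -> inv 1 y.+2 -> inv 0 y /\ inv 1 y.
Proof.
move=> hy [i1 j1] [i2 j2] [i3 j3] [i4 j4].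
have R : forall a b, (a <= 1)%N -> (b < 6)%N -> reg (a,b).
  by move=> a b ha hb; apply: Freg; lia.
have A : forall a b a' b', (a <= 1)%N -> (a' <= 1)%N -> (b < 6)%N -> (b' < 6)%N ->
   gridn (a,b) (a',b') -> adjF (a,b) (a',b').
  move=> a b a' b' ha ha' hb hb' g; apply: adjF_of; try exact: R.
  by rewrite g /=; rewrite /teethcross /=; lia.
have [c1 c2] : (F (0%N, y)).1 = (F (0%N, y.+1)).1 + - V1 /\ (F (0%N, y)).2 = (F (0%N, y.+1)).2 + - V2.
  apply: (@extF (0%N,y.+1) (1%N,y.+1) (0%N,y.+2) (0%N,y) (1%N,y) U1 U2 (-V1) (-V2));
    rewrite ?i1 ?i2 ?i3 ?i4 ?j1 ?j2 ?j3 ?j4; solve_ext R A.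
have [d1 d2] : (F (1%N, y)).1 = (F (1%N, y.+1)).1 + - V1 /\ (F (1%N, y)).2 = (F (1%N, y.+1)).2 + - V2.
  apply: (@extF (1%N,y.+1) (0%N,y.+1) (1%N,y.+2) (1%N,y) (0%N,y) (-U1) (-U2) (-V1) (-V2));
    rewrite ?i1 ?i2 ?i3 ?i4 ?j1 ?j2 ?j3 ?j4; solve_ext R A.
rewrite /inv c1 c2 d1 d2 i1 j1 i2 j2; lia.
Qed.

Lemma arm_all y : (y == 0)%N || (y == 4)%N ->
  inv 0 y -> inv 1 y -> inv 0 y.+1 -> inv 1 y.+1 ->
  forall x, (x < W)%N -> inv x y /\ inv x y.+1.
Proof.
move=> hy i1 i2 i3 i4.
have H : forall x, (x.+1 < W)%N -> [/\ inv x y, inv x y.+1, inv x.+1 y & inv x.+1 y.+1].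
  elim=> [|x IH] hx; first by [].
  have [a b c d] := IH (ltnW hx).
  have [e f] := arm_right hx hy a c b d.
  by [].
case=> [|x] hx; first by [].
by have [] := H x hx.
Qed.

Lemma toothL c : (c.+2 < W)%N -> reg (c.+1,3%N) ->
  inv c 4 -> inv c.+1 4 -> inv c.+2 4 -> inv c.+1 5 ->
  (F (c.+1,3%N)).1 = (F (c.+1,4%N)).1 - V1 /\ (F (c.+1,3%N)).2 = (F (c.+1,4%N)).2 - V2.
Proof.
move=> h2 r [i1 j1] [i2 j2] [i3 j3] [i4 j4].
have R : forall a b, (a < W)%N -> (4 <= b < 6)%N -> reg (a,b) by move=> a b ha hb; apply: Freg; lia.
apply: tooth_raw HU HV HUV _ _ _ _.
- apply/Fadj => //; first by apply: R; lia.
  by rewrite /gridn /teethcross /=; lia.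
- move=> [e1 e2]; apply: (@neqF' (c.+1,3%N) (c.+2,4%N) r);
   [apply: R; lia | move=> E; have := f_equal fst E; have := f_equal snd E; rewrite /=; lia | rewrite e1 i3 i2; lia | rewrite e2 j3 j2; lia].
- move=> [e1 e2]; apply: (@neqF' (c.+1,3%N) (c,4%N) r);
   [apply: R; lia | move=> E; have := f_equal fst E; have := f_equal snd E; rewrite /=; lia | rewrite e1 i1 i2; lia | rewrite e2 j1 j2; lia].
- move=> [e1 e2]; apply: (@neqF' (c.+1,3%N) (c.+1,5%N) r);
   [apply: R; lia | move=> E; have := f_equal fst E; have := f_equal snd E; rewrite /=; lia | rewrite e1 i4 i2; lia | rewrite e2 j4 j2; lia].
Qed.

Lemma toothR c : (c.+2 < W)%N -> reg (c.+1,2%N) ->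
  inv c 1 -> inv c.+1 1 -> inv c.+2 1 -> inv c.+1 0 ->
  (F (c.+1,2%N)).1 = (F (c.+1,1%N)).1 + V1 /\ (F (c.+1,2%N)).2 = (F (c.+1,1%N)).2 + V2.
Proof.
move=> h2 r [i1 j1] [i2 j2] [i3 j3] [i4 j4].
have R : forall a b, (a < W)%N -> (b <= 1)%N -> reg (a,b) by move=> a b ha hb; apply: Freg; lia.
have HUV' : U1 * - V1 + U2 * - V2 = 0 by lia.
have T := tooth_raw HU (unitvN HV) HUV'.
have [] := T ((F (c.+1,1%N)).1) ((F (c.+1,1%N)).2) ((F (c.+1,2%N)).1) ((F (c.+1,2%N)).2); try lia.
- apply/Fadj => //; first by apply: R; lia.
  by rewrite /gridn /teethcross /=; lia.
- move=> [e1 e2]; apply: (@neqF' (c.+1,2%N) (c.+2,1%N) r);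
   [apply: R; lia | move=> E; have := f_equal fst E; have := f_equal snd E; rewrite /=; lia | rewrite e1 i3 i2; lia | rewrite e2 j3 j2; lia].
- move=> [e1 e2]; apply: (@neqF' (c.+1,2%N) (c,1%N) r);
   [apply: R; lia | move=> E; have := f_equal fst E; have := f_equal snd E; rewrite /=; lia | rewrite e1 i1 i2; lia | rewrite e2 j1 j2; lia].
- move=> [e1 e2]; apply: (@neqF' (c.+1,2%N) (c.+1,0%N) r);
   [apply: R; lia | move=> E; have := f_equal fst E; have := f_equal snd E; rewrite /=; lia | rewrite e1 i4 i2; lia | rewrite e2 j4 j2; lia].
Qed.

End Frame.

Lemma no_embed c : (1 <= c)%N -> (c.+2 < W)%N -> reg (c.+1,3%N) -> reg (c.+1,2%N) -> False.
Proof.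
move=> c1 hc r3 r2.
have W2 : (1 < W)%N by lia.
have Aj : forall p q, reg p -> reg q -> gridn p q && ~~ teethcross p q -> adjF p q
  by move=> p q rp rq h; apply/Fadj.
have r04 : reg (0%N,4%N) by apply: Freg; lia.
have r14 : reg (1%N,4%N) by apply: Freg; lia.
have r05 : reg (0%N,5%N) by apply: Freg; lia.
have r15 : reg (1%N,5%N) by apply: Freg; lia.
have HU0 := Aj _ _ r14 r04 isT.
have HV0 := Aj _ _ r05 r04 isT.
have Hd1 := Aj _ _ r15 r14 isT.
have Hd2 := Aj _ _ r15 r05 isT.
have N1 : (1%N,4%N) <> (0%N,5%N) by [].
have N2 : (1%N,5%N) <> (0%N,4%N) by [].
have N1' := neqF r14 r05 N1. have N2' := neqF r15 r04 N2.
pose p1 := (F (0%N,4%N)).1. pose p2 := (F (0%N,4%N)).2.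
pose U1 := (F (1%N,4%N)).1 - p1. pose U2 := (F (1%N,4%N)).2 - p2.
pose V1 := (F (0%N,5%N)).1 - p1. pose V2 := (F (0%N,5%N)).2 - p2.
have HU : unitv U1 U2 by exact: HU0.
have HV : unitv V1 V2 by exact: HV0.
have NUV : ~ (U1 = V1 /\ U2 = V2) by rewrite /U1 /V1 /U2 /V2 => -[e1 e2]; apply: N1'; lia.
have HUV : U1 * V1 + U2 * V2 = 0.
  apply: (base_raw HU HV NUV (d1 := (F (1%N,5%N)).1) (d2 := (F (1%N,5%N)).2) (p1 := p1) (p2 := p2)).
  - have -> : p1 + U1 = (F (1%N,4%N)).1 by rewrite /U1; lia.
    have -> : p2 + U2 = (F (1%N,4%N)).2 by rewrite /U2; lia.
    exact: Hd1.
  - have -> : p1 + V1 = (F (0%N,5%N)).1 by rewrite /V1; lia.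
    have -> : p2 + V2 = (F (0%N,5%N)).2 by rewrite /V2; lia.
    exact: Hd2.
  - exact: N2'.
have [e1 e2] : (F (1%N,5%N)).1 = p1 + U1 + V1 /\ (F (1%N,5%N)).2 = p2 + U2 + V2.
  apply: (base_raw2 HU HV NUV).
  - have -> : p1 + U1 = (F (1%N,4%N)).1 by rewrite /U1; lia.
    have -> : p2 + U2 = (F (1%N,4%N)).2 by rewrite /U2; lia.
    exact: Hd1.
  - have -> : p1 + V1 = (F (0%N,5%N)).1 by rewrite /V1; lia.
    have -> : p2 + V2 = (F (0%N,5%N)).2 by rewrite /V2; lia.
    exact: Hd2.
  - exact: N2'.
pose O1 := p1 - 4 * V1. pose O2 := p2 - 4 * V2.
have i04 : inv O1 O2 U1 U2 V1 V2 0 4 by rewrite /inv /O1 /V1 /V2 /O2; lia.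
have i14 : inv O1 O2 U1 U2 V1 V2 1 4 by rewrite /inv /O1 /V1 /V2 /O2 /U1 /U2; lia.
have i05 : inv O1 O2 U1 U2 V1 V2 0 5 by rewrite /inv /O1 /V1 /V2 /O2 /U1 /U2; lia.
have i15 : inv O1 O2 U1 U2 V1 V2 1 5 by rewrite /inv e1 e2 /O1 /V1 /V2 /O2 /U1 /U2; lia.
have T := arm_all HU HV HUV (y:=4%N) isT i04 i14 i05 i15.
have [i03 i13] := col_down HU HV HUV W2 (y:=3%N) isT i04 i14 i05 i15.
have [i02 i12] := col_down HU HV HUV W2 (y:=2%N) isT i03 i13 i04 i14.
have [i01 i11] := col_down HU HV HUV W2 (y:=1%N) isT i02 i12 i03 i13.
have [i00 i10] := col_down HU HV HUV W2 (y:=0%N) isT i01 i11 i02 i12.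
have B := arm_all HU HV HUV (y:=0%N) isT i00 i10 i01 i11.
have L1 : (c < W)%N by lia. have L2 : (c.+1 < W)%N by lia.
have [t1 t2] := toothL HU HV HUV W2 hc r3 (T c L1).1 (T c.+1 L2).1 (T c.+2 hc).1 (T c.+1 L2).2.
have [s1 s2] := toothR HU HV HUV W2 hc r2 (B c L1).2 (B c.+1 L2).2 (B c.+2 hc).2 (B c.+1 L2).1.
have [k1 k2] := (T c.+1 L2).1. have [k3 k4] := (B c.+1 L2).2.
have : adjF (c.+1,3%N) (c.+1,2%N).
  rewrite /adjF t1 t2 s1 s2 k1 k2 k3 k4.
  have -> : O1 + Z.of_nat c.+1 * U1 + Z.of_nat 4 * V1 - V1 -
     (O1 + Z.of_nat c.+1 * U1 + Z.of_nat 1 * V1 + V1) = V1 by lia.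
  have -> : O2 + Z.of_nat c.+1 * U2 + Z.of_nat 4 * V2 - V2 -
     (O2 + Z.of_nat c.+1 * U2 + Z.of_nat 1 * V2 + V2) = V2 by lia.
  exact: HV.
move/(Fadj r3 r2); rewrite /gridn /teethcross /=; lia.
Qed.
End Rigid.

Local Close Scope Z_scope.
Import GRing.Theory.
Set Implicit Arguments. Unset Strict Implicit. Unset Printing Implicit Defensive.

Local Open Scope ring_scope.
Lemma sq1 (x y : int) : x ^+ 2 + y ^+ 2 = 1 -> (x = 1 \/ x = -1) /\ y = 0 \/ x = 0 /\ (y = 1 \/ y = -1).
Proof. rewrite !expr2; nia. Qed.
Local Close Scope ring_scope.

Section Cons.
Variable N : nat.
Definition WW := 8 + N.*2.
Definition tooth (A : {set 'I_N}) (x : nat) : bool :=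
  [exists i : 'I_N, (x == 6 + i.*2) && (i \in A)].
Definition inLr A (p : nat * nat) : bool :=
  [&& p.1 < WW, p.2 < 6 & [|| 4 <= p.2, p.1 <= 1, (p.2 <= 1) && (p.1 <= 3) | (p.2 == 3) && tooth A p.1]].
Definition inRr B (p : nat * nat) : bool :=
  [&& p.1 < WW, p.2 < 6 & ((p.2 <= 1) && (3 <= p.1)) || (p.2 == 2) && tooth B p.1].
Definition pt (p : 'I_WW * 'I_6) : nat * nat := (nat_of_ord p.1, nat_of_ord p.2).
Definition VL A := {p : 'I_WW * 'I_6 | inLr A (pt p)}.
Definition VR B := {p : 'I_WW * 'I_6 | inRr B (pt p)}.

Lemma lt3W : 3 < WW. Proof. rewrite /WW; lia. Qed.
Lemma le26 : 2 <= 6. Proof. by []. Qed.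
Definition o3 : 'I_WW := Ordinal lt3W.
Lemma labL_ok A (i : 'I_2) : inLr A (pt (o3, widen_ord le26 i)).
Proof. case: i => [m hm]; rewrite /inLr /pt /WW /=; lia. Qed.
Lemma labR_ok B (i : 'I_2) : inRr B (pt (o3, widen_ord le26 i)).
Proof. case: i => [m hm]; rewrite /inRr /pt /WW /=; lia. Qed.
Definition labL A (i : 'I_2) : VL A := exist (fun p => inLr A (pt p)) _ (labL_ok A i).
Definition labR B (i : 'I_2) : VR B := exist (fun p => inRr B (pt p)) _ (labR_ok B i).
Definition LG A : lgraph 2 :=
  @LGraph 2 (@FGraph (VL A) (fun a b => gridn (pt (val a)) (pt (val b)))) (labL A).
Definition RG B : lgraph 2 :=
  @LGraph 2 (@FGraph (VR B) (fun a b => gridn (pt (val a)) (pt (val b)))) (labR B).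

Lemma toothP A x : tooth A x -> 6 <= x.
Proof. by case/existsP => i /andP [/eqP -> _]; lia. Qed.

Lemma tooth2 A B x : tooth A x -> tooth B x -> exists i, i \in A :&: B.
Proof.
case/existsP => i /andP [/eqP e1 iA]; case/existsP => j /andP [/eqP e2 jB].
have ij : i = j by apply: val_inj; rewrite /=; lia.
by exists i; rewrite inE iA ij jB.
Qed.

Lemma pt_inj : injective pt.
Proof.
move=> [a b] [c d]; rewrite /pt /= => -[e1 e2].
by congr pair; apply: val_inj.
Qed.

Lemma LR_inter A B p : inLr A p -> inRr B p -> (p.1 == 3) && (p.2 <= 1).
Proof.
rewrite /inLr /inRr; have := @toothP A p.1; have := @toothP B p.1.
case: (tooth A p.1); case: (tooth B p.1); lia.
Qed.

Section Glued.
Variables (A B : {set 'I_N}).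
Notation G := (glue (LG A) (RG B)).
Notation keep := (@glue_keep 2 (LG A) (RG B)).
Notation rmap := (@glue_rmap 2 (LG A) (RG B)).
Definition cgs (x : VL A + VR B) : nat * nat :=
  match x with inl a => pt (val a) | inr b => pt (val b) end.
Definition cg (u : vert G) : nat * nat := cgs (val u).
Definition isinl (x : VL A + VR B) : bool := if x is inl _ then true else false.

Lemma codomR (b : VR B) :
  (b \in codom (lab (RG B))) = ((pt (val b)).1 == 3) && ((pt (val b)).2 <= 1).
Proof.
apply/codomP/idP.
  by move=> [i ->] /=; case: i => [[|[|]]].
move=> /andP [/eqP e1 e2]; exists (Ordinal (e2 : (pt (val b)).2 < 2)).
apply: val_inj; apply: pt_inj.
rewrite -[RHS]/(3, (pt (val b)).2).
by rewrite [LHS]surjective_pairing e1.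
Qed.

Lemma keep_inr (b : VR B) : keep (inr b) = (b \notin codom (lab (RG B))).
Proof. by []. Qed.

Lemma keep_inj (x y : VL A + VR B) :
  keep x -> keep y -> cgs x = cgs y -> x = y.
Proof.
have H : forall (a : VL A) (b : VR B), keep (inr b) -> pt (val a) <> pt (val b).
  move=> a b; rewrite keep_inr codomR => kb e.
  have ha := valP a; rewrite e in ha.
  by have := LR_inter ha (valP b); rewrite (negbTE kb).
case: x => [a|a]; case: y => [b|b] /= ka kb e.
- by congr inl; apply: val_inj; apply: pt_inj.
- by case: (H a b kb e).
- by case: (H b a ka (esym e)).
- by congr inr; apply: val_inj; apply: pt_inj.
Qed.

Lemma cg_inj : injective cg.
Proof. move=> u w e; apply: val_inj; apply: keep_inj => //; [exact: valP | exact: valP]. Qed.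

Lemma isinlE (x : VL A + VR B) : keep x -> isinl x = inLr A (cgs x).
Proof.
case: x => [a|b] //= kb; first by rewrite (valP a).
apply/esym/negbTE/negP => hL.
have := LR_inter hL (valP b); rewrite ?keep_inr codomR in kb.
by move=> h; move: kb; rewrite h.
Qed.

Lemma region (x : VL A + VR B) : inLr A (cgs x) || inRr B (cgs x).
Proof. by case: x => [a|b] /=; rewrite ?(valP a) ?(valP b) ?orbT. Qed.

Lemma mkO (p : nat * nat) : p.1 < WW -> p.2 < 6 -> exists q : 'I_WW * 'I_6, pt q = p.
Proof. by case: p => x y h1 h2; exists (Ordinal h1, Ordinal h2). Qed.

Lemma exL p : inLr A p -> exists a : VL A, pt (val a) = p.
Proof.
move=> h; have /andP [h1 /andP [h2 _]] := h.
have [q e] := mkO h1 h2.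
have hq : inLr A (pt q) by rewrite e.
by exists (exist _ q hq).
Qed.

Lemma exR p : inRr B p -> exists b : VR B, pt (val b) = p.
Proof.
move=> h; have /andP [h1 /andP [h2 _]] := h.
have [q e] := mkO h1 h2.
have hq : inRr B (pt q) by rewrite e.
by exists (exist _ q hq).
Qed.

Lemma surj p : inLr A p || inRr B p -> exists u : vert G, cg u = p.
Proof.
case hL: (inLr A p) => /= h.
  have [a e] := exL hL.
  by exists (exist _ (inl a) isT).
have [b e] := exR h.
have kb : keep (inr b).
  rewrite keep_inr codomR; apply/negP => /andP [/eqP e1 e2].
  move: hL (valP b) e2; rewrite -e /inLr /inRr e1 /WW; lia.
by exists (exist _ (inr b) kb).
Qed.

Lemma rmapE (b : VR B) :
  cgs (rmap b) = pt (val b) /\ keep (rmap b).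
Proof.
rewrite /glue_rmap; case: pickP => [i /eqP <-|H] /=.
  by split => //; case: i => [[|[|]]].
split => //; rewrite ?keep_inr; apply/negP; move/codomP => -[i e].
by move: (H i); rewrite /= e eqxx.
Qed.

Definition teeth_ok := True.

Lemma arith p q : inLr A p || inRr B p -> inLr A q || inRr B q -> gridn p q ->
  (inLr A p && inLr A q || inRr B p && inRr B q) = ~~ teethcross p q.
Proof.
case: p q => [x y] [x' y']; rewrite /inLr /inRr /gridn /teethcross /=.
have := @toothP A x; have := @toothP B x; have := @toothP A x'; have := @toothP B x'.
case: (tooth A x); case: (tooth B x); case: (tooth A x'); case: (tooth B x'); lia.
Qed.


Lemma adjE (u w : vert G) : adj u w = gridn (cg u) (cg w) && ~~ teethcross (cg u) (cg w).
Proof.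
change (@glue_adj 2 (LG A) (RG B) u w = gridn (cg u) (cg w) && ~~ teethcross (cg u) (cg w)); rewrite /glue_adj.
have EL : [exists a : vert (lg (LG A)), exists b : vert (lg (LG A)), adj a b && (inl a == val u) && (inl b == val w)] =
   isinl (val u) && isinl (val w) && gridn (cg u) (cg w).
  apply/idP/idP.
  - case/existsP => a /existsP [b /andP [/andP [g /eqP ea] /eqP eb]].
    by rewrite /cg -ea -eb /=; exact: g.
  - case: u w => [[a|a] ka] [[b|b] kb] //= g.
    apply/existsP; exists a; apply/existsP; exists b.
    by apply/andP; split; [apply/andP; split|] => //; exact: g.
have ER : [exists a : vert (lg (RG B)), exists b : vert (lg (RG B)), adj a b && (rmap a == val u) && (rmap b == val w)] =
   inRr B (cg u) && inRr B (cg w) && gridn (cg u) (cg w).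
  apply/idP/idP.
  - case/existsP => a /existsP [b /andP [/andP [g /eqP ea] /eqP eb]].
    have [ca _] := rmapE a; have [cb _] := rmapE b.
    rewrite /cg -ea -eb ca cb (valP a) (valP b) /=; exact: g.
  - case/andP => /andP [ru rw] g.
    have [a ea] := exR ru; have [b eb] := exR rw.
    apply/existsP; exists a; apply/existsP; exists b.
    have [ca ka] := rmapE a; have [cb kb] := rmapE b.
    apply/andP; split; [apply/andP; split|].
    + by rewrite /= ea eb.
    + by apply/eqP; apply: keep_inj ka (valP u) _; rewrite ca ea.
    + by apply/eqP; apply: keep_inj kb (valP w) _; rewrite cb eb.
rewrite EL ER (isinlE (valP u)) (isinlE (valP w)).
have := arith (region (val u)) (region (val w)).
rewrite /cg; case: (gridn _ _) => [/(_ isT) <-|_]; last by rewrite !andbF.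
by rewrite !andbT.
Qed.

Definition Vg (p : nat * nat) : vert G :=
  odflt (glue_sp (LG A) (RG B) ord0) [pick u | cg u == p].

Lemma VgE p : inLr A p || inRr B p -> cg (Vg p) = p.
Proof.
move=> h; have [u e] := surj h.
rewrite /Vg; case: pickP => [v /eqP //|H].
by move: (H u); rewrite e eqxx.
Qed.

Lemma cg_sp (i : 'I_2) : cg (glue_sp (LG A) (RG B) i) = (3, val i).
Proof. by []. Qed.

Lemma regionu (u : vert G) : inLr A (cg u) || inRr B (cg u).
Proof. exact: region. Qed.

Definition pot (p : nat * nat) : nat :=
  10 * p.1 + (if p.1 <= 1 then p.2 else if p.2 == 3 then 9 else if p.2 == 2 then 8 else p.2).

Lemma step p : inLr A p || inRr B p -> p <> (0,0) ->
  exists q, [/\ inLr A q || inRr B q, gridn p q && ~~ teethcross p q & pot q < pot p].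
Proof.
case: p => x y h ne.
have tA := @toothP A x; have tB := @toothP B x.
move: h; rewrite /inLr /inRr /WW /= => h.
case: (leqP x 1) => hx.
  case: (x =P 1) => [ex|nx].
    exists (0, y); rewrite /inLr /inRr /gridn /teethcross /pot /WW /=; split; try lia; repeat (case: ifP => ?); lia.
  have y0 : 0 < y.
    case: y ne h => // ne _; have x0 : x = 0 by lia.
    by rewrite x0 in ne.
  exists (0, y.-1); rewrite /inLr /inRr /gridn /teethcross /pot /WW /=; split; try lia; repeat (case: ifP => ?); lia.
case: (y =P 3) => [e3|n3].
  exists (x, 4); rewrite /inLr /inRr /gridn /teethcross /pot /WW /=; split; try lia; repeat (case: ifP => ?); lia.
case: (y =P 2) => [e2|n2].
  exists (x, 1); rewrite /inLr /inRr /gridn /teethcross /pot /WW /=; split; try lia; repeat (case: ifP => ?); lia.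
exists (x.-1, y); rewrite /inLr /inRr /gridn /teethcross /pot /WW /=; split; try lia; repeat (case: ifP => ?); lia.
Qed.

Lemma conn (u : vert G) : connect adj u (Vg (0,0)).
Proof.
have r0 : inLr A (0,0) || inRr B (0,0) by rewrite /inLr /WW /=.
move: {2}(pot (cg u)) (leqnn (pot (cg u))) => n.
elim: n u => [|n IH] u hn.
  case: (cg u =P (0,0)) => [e|ne].
    by have -> : u = Vg (0,0) by apply: cg_inj; rewrite e VgE.
  have [q [rq aq pq]] := step (regionu u) ne; lia.
case: (cg u =P (0,0)) => [e|ne].
  by have -> : u = Vg (0,0) by apply: cg_inj; rewrite e VgE.
have [q [rq aq pq]] := step (regionu u) ne.
apply: connect_trans (IH (Vg q) _); last by rewrite VgE //; lia.
by apply: connect1; rewrite adjE VgE.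
Qed.

Lemma adj_sym : symmetric (@adj G).
Proof.
move=> u w; rewrite !adjE; case: (cg u) => x y; case: (cg w) => x' y'.
rewrite /gridn /teethcross /=; lia.
Qed.

Lemma connected : connected_graph G.
Proof.
move=> x y; apply: connect_trans (conn x) _.
by rewrite (sym_connect_sym adj_sym); exact: conn.
Qed.

Lemma card_G : #|vert G| <= 12 * WW.
Proof.
have -> : #|vert G| = #|[pred x : VL A + VR B | keep x]| by exact: card_sig.
apply: leq_trans (max_card _) _.
rewrite card_sum /VL /VR !card_sig.
apply: leq_trans (leq_add (max_card _) (max_card _)) _.
rewrite card_prod !card_ord; lia.
Qed.

Definition inbox (p : nat * nat) := (2 <= p.1 <= 4) && (p.2 <= 1).

Lemma NSE u : (u \in glue_NS (LG A) (RG B)) = inbox (cg u).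
Proof.
rewrite /glue_NS /closed_nbhd inE; apply/idP/idP.
  case/orP => /existsP [i].
    by move/eqP ->; rewrite cg_sp /inbox /=; case: i => [[|[|]]].
  rewrite adjE cg_sp; have := regionu u; case: (cg u) => x y.
  have tA := @toothP A x; have tB := @toothP B x.
  rewrite /inLr /inRr /gridn /teethcross /inbox /WW /=; case: i => [m hm] /=; lia.
case: (cg u =P (3, (cg u).2)) => [e|ne] /andP [h1 h2].
  apply/orP; left; apply/existsP; exists (Ordinal (h2 : (cg u).2 < 2)).
  by apply/eqP; apply: cg_inj; rewrite cg_sp.
apply/orP; right; apply/existsP; exists (Ordinal (h2 : (cg u).2 < 2)).
rewrite adjE cg_sp /=; move: ne h1 h2; case: (cg u) => x y /= ne h1 h2.
have nx : x <> 3 by move=> e; apply: ne; rewrite e.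
rewrite /gridn /teethcross /=; lia.
Qed.

Lemma card_NS : #|glue_NS (LG A) (RG B)| <= 6.
Proof.
rewrite -card_sig.
pose h (x : {u : vert G | u \in glue_NS (LG A) (RG B)}) : 'I_3 * 'I_2 :=
  (inord ((cg (val x)).1 - 2), inord (cg (val x)).2).
have : injective h.
  move=> x y [e1 e2]; apply: val_inj; apply: cg_inj.
  have := valP x; have := valP y; rewrite !NSE /inbox.
  move: (cg (val x)) (cg (val y)) e1 e2 => [a b] [c d] /= e1 e2 /andP [hy1 hy2] /andP [hx1 hx2].
  have [E1 E2] : a - 2 = c - 2 /\ b = d.
    by split; [move/(congr1 val): e1 | move/(congr1 val): e2]; rewrite /= !inordK //; lia.
  congr pair; lia.
move/leq_card; rewrite card_prod !card_ord //.
Qed.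

Lemma gridnE (p q : nat * nat) :
  gridn p q = grid_adj (Posz p.1, Posz p.2) (Posz q.1, Posz q.2).
Proof.
case: p q => a b [c d]; rewrite /grid_adj /gridn /=.
apply/idP/idP; first lia.
move/eqP/sq1; lia.
Qed.

Lemma grid_adjZ (p q : int * int) : grid_adj p q <->
  unitv (Z.sub (ssrZ.Z_of_int p.1) (ssrZ.Z_of_int q.1)) (Z.sub (ssrZ.Z_of_int p.2) (ssrZ.Z_of_int q.2)).
Proof.
case: p q => a b [c d]; rewrite /grid_adj /unitv /=; split.
  move/eqP/sq1; lia.
move=> h; apply/eqP; lia.
Qed.

Lemma tc_tooth p q : inLr A p || inRr B p -> inLr A q || inRr B q -> gridn p q ->
  teethcross p q -> exists x, tooth A x && tooth B x.
Proof.
case: p q => [x y] [x' y'] /=.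
move=> hp hq g t.
have ex : x' = x by move: g t; rewrite /gridn /teethcross /=; lia.
subst x'; exists x.
move: hp hq g t; rewrite /inLr /inRr /gridn /teethcross /WW /=.
have := @toothP A x; have := @toothP B x.
case: (tooth A x); case: (tooth B x); lia.
Qed.

Lemma embed : A :&: B = set0 -> grid_induced G.
Proof.
move=> dAB; exists (fun u => (Posz (cg u).1, Posz (cg u).2)); split.
  move=> u w /= [e1 e2]; apply: cg_inj.
  by rewrite [cg u]surjective_pairing [cg w]surjective_pairing e1 e2.
move=> u w; rewrite adjE -gridnE.
case g: (gridn _ _) => //=.
case t: (teethcross _ _) => //=.
have [x /andP [ha hb]] := tc_tooth (regionu u) (regionu w) g t.
have [j] := tooth2 ha hb; by rewrite dAB inE.
Qed.

Lemma no_grid i : i \in A :&: B -> ~ grid_induced G.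
Proof.
move=> iAB [f [finj fadj]].
move: iAB; rewrite inE => /andP [iA iB].
pose F p := (ssrZ.Z_of_int (f (Vg p)).1, ssrZ.Z_of_int (f (Vg p)).2).
pose reg p := inLr A p || inRr B p.
have Zi : injective ssrZ.Z_of_int := can_inj ssrZ.Z_of_intK.
apply: (@no_embed WW F reg _ _ _ (5 + i.*2)).
- move=> p q rp rq [e1 e2].
  rewrite -(VgE rp) -(VgE rq); congr cg; apply: finj.
  by rewrite [f (Vg p)]surjective_pairing [f (Vg q)]surjective_pairing (Zi _ _ e1) (Zi _ _ e2).
- move=> p q rp rq; rewrite /adjF /F /=; split => h.
    by have := (grid_adjZ _ _).2 h; rewrite -fadj adjE !VgE.
  by apply/grid_adjZ; rewrite -fadj adjE !VgE.
- move=> x y hx hy hxy; move: hx; rewrite /reg /inLr /inRr /WW /=.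
  have := @toothP A x; have := @toothP B x; case: (tooth A x); case: (tooth B x); lia.
- lia.
- have := ltn_ord i; rewrite /WW; lia.
- rewrite /reg /inLr; apply/orP; left.
  have t : tooth A (5 + i.*2).+1 by apply/existsP; exists i; rewrite iA andbT; apply/eqP; lia.
  rewrite t /WW /=; have := ltn_ord i; lia.
- rewrite /reg /inRr; apply/orP; right.
  have t : tooth B (5 + i.*2).+1 by apply/existsP; exists i; rewrite iB andbT; apply/eqP; lia.
  rewrite t /WW /=; have := ltn_ord i; lia.
Qed.
End Glued.

Lemma box_reg A B p : inbox p -> inLr A p || inRr B p.
Proof.
case: p => x y; rewrite /inbox /inLr /inRr /WW /=.
have := @toothP A x; have := @toothP B x; case: (tooth A x); case: (tooth B x); lia.
Qed.

Lemma VgB A B p : inbox p -> cg (Vg A B p) = p.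
Proof. by move=> h; apply: VgE; apply: box_reg. Qed.

Lemma iso_NS A B A' B' :
  exists phi : vert (induced (glue_NS (LG A) (RG B))) ->
               vert (induced (glue_NS (LG A') (RG B'))),
    iso_graph phi /\
    forall x i, val x = glue_sp (LG A) (RG B) i -> val (phi x) = glue_sp (LG A') (RG B') i.
Proof.
have bx : forall A B (x : vert (induced (glue_NS (LG A) (RG B)))), inbox (cg (val x)).
  by move=> A1 B1 x; have := valP x; rewrite /= NSE.
have H : forall A B A' B' (x : vert (induced (glue_NS (LG A) (RG B)))),
    Vg A' B' (cg (val x)) \in glue_NS (LG A') (RG B').
  by move=> A1 B1 A2 B2 x; rewrite NSE VgB; apply: bx.
pose phi x := exist (fun u => u \in glue_NS (LG A') (RG B')) _ (H A B A' B' x).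
pose psi x := exist (fun u => u \in glue_NS (LG A) (RG B)) _ (H A' B' A B x).
exists phi; split; [split|].
- exists psi => x; apply: val_inj; apply: cg_inj => /=; rewrite !VgB //; apply: bx.
- move=> x y.
  have E1 := adjE (val (phi x)) (val (phi y)); have E2 := adjE (val x) (val y).
  have E3 : cg (val (phi x)) = cg (val x) by rewrite /= VgB //; apply: bx.
  have E4 : cg (val (phi y)) = cg (val y) by rewrite /= VgB //; apply: bx.
  rewrite E3 E4 -E2 in E1; exact: E1.
- move=> x i e; apply: cg_inj => /=; rewrite VgB ?e //; rewrite -e; apply: bx.
Qed.

Lemma gridn_sym p q : gridn p q = gridn q p.
Proof. case: p q => a b [c d]; rewrite /gridn /=; apply/idP/idP; lia. Qed.
Lemma gridn_irr p : ~~ gridn p p.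
Proof. case: p => a b; rewrite /gridn /=; lia. Qed.

Lemma goodL A : good_lgraph (LG A).
Proof.
split; first by split; [move=> x y; exact: gridn_sym | move=> x; exact: gridn_irr].
move=> i j /(congr1 (fun a : VL A => (pt (val a)).2)) e.
by apply: val_inj.
Qed.

Lemma goodR B : good_lgraph (RG B).
Proof.
split; first by split; [move=> x y; exact: gridn_sym | move=> x; exact: gridn_irr].
move=> i j /(congr1 (fun a : VR B => (pt (val a)).2)) e.
by apply: val_inj.
Qed.
End Cons.


Theorem corollary5p6 : disjointness_expressing grid_induced 6 1.
Proof.
exists (IZR 120); split; first lra.
move=> N N0; exists 2, (@LG N), (@RG N).
split; [by move=> X; split; [exact: goodL | exact: goodR]|].
split.
  move=> A B; split; first exact: connected.
  have hN : Rlt (IZR 0) (INR N) by apply: lt_0_INR; apply/ltP.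
  have -> : INR 1 = IZR 1 by [].
  rewrite Rinv_1 Rpower_1 //.
  have h : #|vert (glue (LG A) (RG B))| <= 120 * N.
    apply: leq_trans (card_G A B) _; rewrite /WW; lia.
  apply: Rle_trans (le_INR _ _ (leP h)) _.
  rewrite mult_INR; right; congr Rmult; simpl; ring.
split; first by move=> A A' B B'; exact: iso_NS.
split; first exact: card_NS.
move=> A B; split.
  move=> hg; case: (set_0Vmem (A :&: B)) => [//|[i hi]].
  by case: (no_grid hi hg).
exact: embed.
Qed.
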